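(* Let $k\ge 2$ be an integer, $\pi\in S_k$, $\epsilon>0$, and let $\delta_0\ge 1$ and $\Delta_0$ be positive constants. There is a constant $c=c(k,\pi,\epsilon,\delta_0,\Delta_0)$ such that the following holds. Let $n, L$ be positive integers and let $\Lambda$ be a $k$-uniform hypergraph on vertex set $\{1,\dots,n\}$ which contains a collection of $L$-vertex cliques (sets of $L$ vertices all of whose $k$-subsets are edges of $\Lambda$) such that each of the $n$ vertices belongs to at least $\delta_0$ and at most $\Delta_0$ cliques of the collection. Then the number of $\sigma\in S_n$ that $\Lambda$-avoid $\pi$ is at most \[\left(\frac{c\, n\log^{2+\epsilon}n}{L}\right)^n.\]
   Context: For a $k$-uniform hypergraph $\Lambda$ on vertex set $\{1,\dots,n\}$, a permutation $\sigma\in S_n$ $\Lambda$-contains $\pi\in S_k$ if there exist integers $1\le x_1<\dots<x_k\le n$ with $\{x_1,\dots,x_k\}\in E(\Lambda)$ such that for all $i,j$, $\pi(i)<\pi(j)\iff\sigma(x_i)<\sigma(x_j)$; otherwise $\sigma$ $\Lambda$-avoids $\pi$. *)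

(* Defs.v *)
From Stdlib Require Import Reals.
From mathcomp Require Import all_boot all_fingroup.
Set Implicit Arguments.
Unset Strict Implicit.
Unset Printing Implicit Defensive.

(* A k-uniform hypergraph on vertex set 'I_n (= {1..n} shifted to {0..n-1})
   is a set of edges, each a k-subset of 'I_n. *)
Definition k_uniform (n k : nat) (E : {set {set 'I_n}}) : Prop :=
  forall e, e \in E -> #|e| = k.

Definition hcontains (n k : nat) (E : {set {set 'I_n}}) (pi : 'S_k)
    (sigma : 'S_n) : bool :=
  [exists x : {ffun 'I_k -> 'I_n},
    [&& [forall i : 'I_k, forall j : 'I_k, (i < j)%N ==> (x i < x j)%N],
        [set x i | i : 'I_k] \in E &
        [forall i : 'I_k, forall j : 'I_k,
           (pi i < pi j)%N == (sigma (x i) < sigma (x j))%N]]].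

Definition havoids (n k : nat) (E : {set {set 'I_n}}) (pi : 'S_k)
    (sigma : 'S_n) : bool := ~~ hcontains E pi sigma.

Definition is_clique (n k : nat) (E : {set {set 'I_n}}) (C : {set 'I_n}) : Prop :=
  forall S : {set 'I_n}, S \subset C -> #|S| = k -> S \in E.

(* Main.v *)
Require Import Defs.
From Stdlib Require Import Reals Lra.
From mathcomp Require Import all_boot all_fingroup zify.
Set Implicit Arguments.
Unset Strict Implicit.
Unset Printing Implicit Defensive.


Lemma incr_ex M (A : {set 'I_M}) k : k.+1 <= #|A| ->
  exists x : nat -> 'I_M, (forall t, t <= k -> x t \in A) /\
     (forall s t, s < t -> t <= k -> (x s < x t)%N).
Proof.
elim: k A => [|k IH] A hA.
  have [a aA] : exists a, a \in A by apply/set0Pn; rewrite -card_gt0.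
  by exists (fun _ => a); split => // s t; case: t.
have [a aA] : exists a, a \in A by apply/set0Pn; rewrite -card_gt0; lia.
case: (arg_minnP (fun i : 'I_M => val i) aA) => m mA mmin.
have hA' : k.+1 <= #|A :\ m|.
  by move: hA; rewrite (cardsD1 m A) (_ : m \in A = true) //; lia.
have [x [xA xinc]] := IH _ hA'.
exists (fun t => if t is t'.+1 then x t' else m); split.
  by case=> [|t] //= ht; move: (xA t ht); rewrite in_setD1 => /andP[].
case=> [|s] [|t] // hst ht /=.
  move: (xA t ht); rewrite in_setD1 => /andP[hne hin].
  have := mmin _ hin; rewrite leq_eqVlt => /orP[/eqP e|//].
  by move: hne; rewrite -(val_inj e) eqxx.
by apply: xinc.
Qed.

Section Pat.
Variables (N k : nat) (pi : 'S_k).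
Definition pt := ('I_N * 'I_N)%type.

Definition occ (S : {set pt}) (f : {ffun 'I_k -> pt}) : bool :=
  [&& [forall t, f t \in S],
  [forall s : 'I_k, forall t : 'I_k, (s < t)%N ==> ((f s).1 < (f t).1)%N] &
  [forall s : 'I_k, forall t : 'I_k, (pi s < pi t)%N ==> ((f s).2 < (f t).2)%N]].
Definition avoid S := [forall f, ~~ occ S f].

Lemma avoidE (S : {set pt}) (f : 'I_k -> pt) : avoid S -> (forall t, f t \in S) ->
  (forall s t : 'I_k, (s < t)%N -> ((f s).1 < (f t).1)%N) ->
  (forall s t : 'I_k, (pi s < pi t)%N -> ((f s).2 < (f t).2)%N) -> False.
Proof.
move=> /forallP /(_ [ffun t => f t]) /negP H h1 h2 h3; apply: H.
apply/and3P; split.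
- by apply/forallP => t; rewrite ffunE.
- by apply/forallP => s; apply/forallP => t; apply/implyP; rewrite !ffunE; apply: h2.
- by apply/forallP => s; apply/forallP => t; apply/implyP; rewrite !ffunE; apply: h3.
Qed.

Lemma avoidI (S : {set pt}) : (forall f : 'I_k -> pt, (forall t, f t \in S) ->
  (forall s t : 'I_k, (s < t)%N -> ((f s).1 < (f t).1)%N) ->
  (forall s t : 'I_k, (pi s < pi t)%N -> ((f s).2 < (f t).2)%N) -> False) -> avoid S.
Proof.
move=> H; apply/forallP => f; apply/negP => /and3P[/forallP h1 /forallP h2 /forallP h3].
apply: (H f) => // s t.
  by move: (h2 s) => /forallP /(_ t) /implyP.
by move: (h3 s) => /forallP /(_ t) /implyP.
Qed.

Lemma avoid_sub (S T : {set pt}) : S \subset T -> avoid T -> avoid S.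
Proof.
move=> sST aT; apply: avoidI => f h1 h2 h3; apply: (avoidE aT) h2 h3 => t.
exact: (subsetP sST).
Qed.

Definition dv q (i : 'I_N) : 'I_N := insubd i (i %/ q).
Lemma dvE q i : val (dv q i) = i %/ q.
Proof. by rewrite val_insubd (leq_ltn_trans (leq_div _ _) (ltn_ord i)). Qed.
Definition cq q (p : pt) : pt := (dv q p.1, dv q p.2).

Lemma div_lt q (a b : nat) : a %/ q < b %/ q -> a < b.
Proof. by move=> h; rewrite ltnNge; apply/negP => /(leq_div2r q); rewrite leqNgt h. Qed.

Lemma avoid_contract q (S : {set pt}) : avoid S -> avoid (cq q @: S).
Proof.
move=> aS; apply: avoidI => f h1 h2 h3.
have [g hg] : exists g : 'I_k -> pt, forall t, g t \in S /\ cq q (g t) = f t.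
  apply: (@fin_all_exists _ (fun _ => pt) (fun t g => g \in S /\ cq q g = f t)) => t; have /imsetP[p pS ->] := h1 t; by exists p.
apply: (avoidE aS (f := g)).
- by move=> t; case: (hg t).
- move=> s t /h2; case: (hg s) => _ <-; case: (hg t) => _ <- /=.
  by rewrite !dvE; apply: div_lt.
- move=> s t /h3; case: (hg s) => _ <-; case: (hg t) => _ <- /=.
  by rewrite !dvE; apply: div_lt.
Qed.

Definition box a := [set p : pt | (p.1 < a)%N && (p.2 < a)%N].
End Pat.

Lemma card_bound N (A : {set 'I_N}) q : (forall i, i \in A -> (i < q)%N) -> #|A| <= q.
Proof.
move=> H; rewrite cardE -(size_map val) -(size_iota 0 q).
apply: uniq_leq_size; first by rewrite map_inj_uniq ?enum_uniq //; apply: val_inj.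
move=> x /mapP[i]; rewrite mem_enum => /H iq ->; by rewrite mem_iota.
Qed.

Section Wide.
Variables (N k : nat) (pi : 'S_k) (q : nat).
Hypothesis k0 : 0 < k.
Hypothesis q0 : 0 < q.
Local Notation pt := (pt N).

Definition md (i : 'I_N) : 'I_N := insubd i (i %% q).
Lemma mdE i : val (md i) = i %% q.
Proof. by rewrite val_insubd (leq_ltn_trans (leq_mod _ _) (ltn_ord i)). Qed.

Definition blk (S : {set pt}) b := [set p in S | cq q p == b].
Definition rowsb S b := [set p.1 | p in blk S b].
Definition colsb S b := [set p.2 | p in blk S b].
Definition offs S b := md @: colsb S b.
Definition low := [set i : 'I_N | (i < q)%N].
Definition pk S b := odflt set0 [pick X : {set 'I_N} | (X \subset offs S b) && (#|X| == k)].

Lemma divmod_inj (a b : nat) : a %/ q = b %/ q -> a %% q = b %% q -> a = b.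
Proof. by move=> h1 h2; rewrite (divn_eq a q) (divn_eq b q) h1 h2. Qed.

Lemma blk_card S b : #|blk S b| <= #|rowsb S b| * #|colsb S b|.
Proof.
rewrite -cardsX; apply: subset_leq_card; apply/subsetP => -[p1 p2] pb.
by rewrite in_setX; apply/andP; split; apply/imsetP; exists (p1, p2).
Qed.

Lemma md_inj_col S b : {in colsb S b &, injective md}.
Proof.
move=> x y /imsetP[p pb ->] /imsetP[p' pb' ->] e; apply: val_inj; apply: divmod_inj.
  move: pb pb'; rewrite !inE => /andP[_ /eqP <-] /andP[_ /eqP] [_ e2].
  by move: e2 => /(congr1 val); rewrite !dvE.
by move: e => /(congr1 val); rewrite !mdE.
Qed.

Lemma md_inj_row S b : {in rowsb S b &, injective md}.
Proof.
move=> x y /imsetP[p pb ->] /imsetP[p' pb' ->] e; apply: val_inj; apply: divmod_inj.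
  move: pb pb'; rewrite !inE => /andP[_ /eqP <-] /andP[_ /eqP] [e1 _].
  by move: e1 => /(congr1 val); rewrite !dvE.
by move: e => /(congr1 val); rewrite !mdE.
Qed.

Lemma md_low i : md i \in low.
Proof. by rewrite inE mdE ltn_mod. Qed.

Lemma rows_le S b : #|rowsb S b| <= q.
Proof.
rewrite -(card_in_imset (md_inj_row (S:=S) (b:=b))); apply: card_bound => i /imsetP[j _ ->].
by rewrite mdE ltn_mod.
Qed.

Lemma cols_le S b : #|colsb S b| <= q.
Proof.
rewrite -(card_in_imset (md_inj_col (S:=S) (b:=b))); apply: card_bound => i /imsetP[j _ ->].
by rewrite mdE ltn_mod.
Qed.

Lemma pk_spec S b : k <= #|colsb S b| -> pk S b \subset offs S b /\ #|pk S b| = k.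
Proof.
move=> hw; rewrite /pk; case: pickP => [X /andP[h1 /eqP h2] | H] //=.
exfalso; have : k <= #|offs S b| by rewrite /offs card_in_imset //; apply: md_inj_col.
move/card_geqP => [s [us ss sub]].
move: (H [set x in s]); rewrite cardsE (card_uniqP us) ss eqxx andbT.
by move/negP; apply; apply/subsetP => x; rewrite inE; apply: sub.
Qed.

Lemma pk_low S b : pk S b \subset low.
Proof.
rewrite /pk; case: pickP => [X /andP[h1 _] | _] /=; last by apply/subsetP => x; rewrite inE.
apply: subset_trans h1 _; apply/subsetP => x /imsetP[y _ ->]; exact: md_low.
Qed.


Definition WJ (S : {set pt}) (J : 'I_N) := [set b in cq q @: S | (k <= #|colsb S b|) && (b.2 == J)].

Lemma lt_same_div (a b : nat) : a %/ q = b %/ q -> a %% q < b %% q -> a < b.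
Proof. by move=> h1 h2; rewrite (divn_eq a q) (divn_eq b q) h1 ltn_add2l. Qed.

Lemma fiber_bound (S : {set pt}) (J : 'I_N) (X : {set 'I_N}) : avoid pi S -> #|[set b in WJ S J | pk S b == X]| <= k.-1.
Proof.
move=> aS; rewrite leqNgt; apply/negP => hF.
set F := [set b in WJ S J | pk S b == X] in hF.
have injF : {in F &, injective fst}.
  move=> [b1 b2] [b1' b2']; rewrite !inE => /andP[/andP[_ /andP[_ /eqP e1]] _].
  by move=> /andP[/andP[_ /andP[_ /eqP e2]] _] /= e; rewrite e; move: e1 e2 => /= -> ->.
have hR : k.-1.+1 <= #|fst @: F| by rewrite card_in_imset //; lia.
have [r [rR rinc]] := incr_ex hR.
have [b0 b0F] : exists b0, b0 \in F by apply/set0Pn; rewrite -card_gt0; lia.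
have [hX1 hX2] : pk S b0 \subset offs S b0 /\ #|pk S b0| = k.
  by apply: pk_spec; move: b0F; rewrite !inE => /andP[/andP[_ /andP[-> _]] _].
have eX : pk S b0 = X by move: b0F; rewrite !inE => /andP[_ /eqP].
have hX : k.-1.+1 <= #|X| by rewrite -eX hX2; lia.
have [c [cX cinc]] := incr_ex hX.
have [g hg] : exists g : 'I_k -> pt, forall t, g t \in S /\
     (val (g t).1 %/ q = r t /\ val (g t).2 %/ q = J) /\ md (g t).2 = c (pi t).
  suff H : forall t : 'I_k, exists p : pt, p \in S /\
     (val p.1 %/ q = r t /\ val p.2 %/ q = J) /\ md p.2 = c (pi t).
    by have [g hg] := fin_all_exists H; exists g.
  move=> t.
  have tk : (t <= k.-1)%N by have := ltn_ord t; lia.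
  have /imsetP[b bF eb] := rR _ tk.
  have bW : b \in WJ S J by move: bF; rewrite inE => /andP[].
  have [sub _] : pk S b \subset offs S b /\ #|pk S b| = k.
    by apply: pk_spec; move: bW; rewrite !inE => /andP[_ /andP[-> _]].
  have pkb : pk S b = X by move: bF; rewrite inE => /andP[_ /eqP].
  have ptk : (pi t <= k.-1)%N by have := ltn_ord (pi t); lia.
  have := cX _ ptk; rewrite -pkb => /(subsetP sub) /imsetP[y /imsetP[p pb ->] ey].
  exists p; move: pb; rewrite inE => /andP[pS /eqP cpb]; split => //; split => //.
  move: bW; rewrite inE => /andP[_ /andP[_ /eqP bJ]].
  by rewrite -!dvE -bJ eb -cpb.
apply: (avoidE aS (f := g)).
- by move=> t; case: (hg t).
- move=> s t st; case: (hg s) => _ [[h1 _] _]; case: (hg t) => _ [[h2 _] _].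
  apply: (@div_lt q); rewrite h1 h2; apply: rinc => //; have := ltn_ord t; lia.
- move=> s t st; case: (hg s) => _ [[_ h1] e1]; case: (hg t) => _ [[_ h2] e2].
  apply: lt_same_div; first by rewrite h1 h2.
  rewrite -!mdE e1 e2; apply: cinc => //; have := ltn_ord (pi t); lia.
Qed.


Lemma low_card : #|low| <= q.
Proof. by apply: card_bound => i; rewrite inE. Qed.

Lemma WJ_bound (S : {set pt}) (J : 'I_N) : avoid pi S -> #|WJ S J| <= k.-1 * 2 ^ q.
Proof.
move=> aS; rewrite -sum1_card (partition_big (pk S) (mem (powerset low))); last first.
  by move=> b _; rewrite /= powersetE pk_low.
apply: (@leq_trans (\sum_(X in powerset low) k.-1)).
  apply: leq_sum => X _; rewrite sum1dep_card.
  apply: leq_trans _ (@fiber_bound S J X aS); apply: subset_leq_card; apply/subsetP => b.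
  by rewrite !inE.
rewrite sum_nat_const card_powerset mulnC leq_mul2l leq_pexp2l ?low_card ?orbT //.
Qed.

End Wide.

Section Tall.
Variables (N k : nat) (pi : 'S_k) (q : nat).
Hypothesis k0 : 0 < k.
Hypothesis q0 : 0 < q.
Local Notation pt := (pt N).

Definition tr (p : pt) : pt := (p.2, p.1).

Lemma avoid_tr (S : {set pt}) : avoid pi S -> avoid (pi^-1)%g (tr @: S).
Proof.
move=> aS; apply: avoidI => f h1 h2 h3.
apply: (avoidE aS (f := fun t => tr (f (pi t)))).
- by move=> t; have /imsetP[p pS ->] := h1 (pi t); rewrite /tr; case: p pS.
- move=> s t st; apply: h3; by rewrite !permK.
- move=> s t st; exact: h2.
Qed.

Definition TJ (S : {set pt}) (J : 'I_N) :=
  [set b in cq q @: S | (k <= #|rowsb q S b|) && (b.1 == J)].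

Lemma TJ_bound (S : {set pt}) (J : 'I_N) : avoid pi S -> #|TJ S J| <= k.-1 * 2 ^ q.
Proof.
move=> aS; have := WJ_bound k0 q0 J (avoid_tr aS).
apply: leq_trans; rewrite -(card_imset (TJ S J) (can_inj (g := tr) (f := tr) _)); last by case.
apply: subset_leq_card; apply/subsetP => _ /imsetP[b bT ->].
move: bT; rewrite !inE => /andP[/imsetP[p pS ->] /andP[hr /eqP hJ]].
apply/andP; split; first by apply/imsetP; exists (tr p); [apply: imset_f | by []].
apply/andP; split; last by rewrite -hJ.
apply: leq_trans hr _; apply: subset_leq_card; apply/subsetP => x /imsetP[p' p'b ->].
move: p'b; rewrite inE => /andP[p'S /eqP cp].
apply/imsetP; exists (tr p') => //; rewrite inE; apply/andP; split; first exact: imset_f.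
by rewrite -cp.
Qed.
End Tall.

Lemma count_split N (T : finType) (B : {set T}) (P : pred T) (proj : T -> 'I_N) a M :
  (forall b, b \in B -> (proj b < a)%N) ->
  (forall J, #|[set b in B | P b && (proj b == J)]| <= M) ->
  #|[set b in B | P b]| <= a * M.
Proof.
move=> hB hJ; rewrite -sum1dep_card.
rewrite (partition_big proj (fun J : 'I_N => (J < a)%N)); last first.
  by move=> b /andP[/hB].
apply: (@leq_trans (\sum_(J : 'I_N | (J < a)%N) M)).
  apply: leq_sum => J _; rewrite sum1dep_card; apply: leq_trans (hJ J).
  by apply: subset_leq_card; apply/subsetP => b; rewrite !inE andbA.
rewrite sum_nat_const leq_mul2r; apply/orP; right.
have := (@card_bound N [set J : 'I_N | (J < a)%N] a); rewrite cardsE; apply => i; rewrite inE; apply.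
Qed.

Lemma sum_bool_card (T : finType) (B : {set T}) (P : pred T) :
  \sum_(b in B) (P b : nat) = #|[set b in B | P b]|.
Proof.
rewrite -sum1dep_card big_mkcondr /=; apply: eq_bigr => b _; by case: (P b).
Qed.

Section MT.
Variables (N k : nat) (pi : 'S_k).
Hypothesis k0 : 0 < k.
Local Notation pt := (pt N).
Definition qq := k ^ 2.
Definition cMT := 2 * qq ^ 2 * (k.-1 * 2 ^ qq) + 1.
Lemma qq0 : 0 < qq. Proof. by rewrite expn_gt0 k0. Qed.

Lemma box1 (S : {set pt}) : S \subset box N 1 -> #|S| <= 1.
Proof.
move=> sub; case: (set_0Vmem S) => [-> | [p pS]]; first by rewrite cards0.
rewrite -(cards1 p); apply: subset_leq_card; apply/subsetP => p' p'S; rewrite inE.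
move: (subsetP sub _ pS) (subsetP sub _ p'S); rewrite !inE.
case: p p'S pS => [[a ha] [b hb]] /= _ _; case: p' => [[a' ha'] [b' hb']] /=.
move=> /andP[h1 h2] /andP[h3 h4].
by apply/eqP; congr pair; apply: val_inj => /=; lia.
Qed.

Lemma blk_bound (S : {set pt}) b :
  #|blk qq S b| <= k.-1 * k.-1 + qq ^ 2 * (k <= #|colsb qq S b|) + qq ^ 2 * (k <= #|rowsb qq S b|).
Proof.
apply: leq_trans (blk_card _ _ _) _.
case: (leqP k #|colsb qq S b|) => hc.
  apply: leq_trans (_ : qq ^ 2 <= _); last by rewrite muln1; apply: leq_trans (leq_addl (k.-1*k.-1) _) (leq_addr _ _).
  by rewrite expnS expn1 leq_mul ?rows_le ?cols_le ?qq0.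
case: (leqP k #|rowsb qq S b|) => hr.
  apply: leq_trans (_ : qq ^ 2 <= _); last by rewrite muln0 muln1 addn0 leq_addl.
  by rewrite expnS expn1 leq_mul ?rows_le ?cols_le ?qq0.
rewrite !muln0 !addn0; apply: leq_mul; lia.
Qed.

Lemma MT j (S : {set pt}) : S \subset box N (qq ^ j) -> avoid pi S -> #|S| <= cMT * qq ^ j.
Proof.
elim: j S => [|j IH] S sub aS.
  rewrite expn0 muln1; apply: leq_trans (box1 sub) _; rewrite /cMT addn1; done.
set B := cq qq @: S.
have subB : B \subset box N (qq ^ j).
  apply/subsetP => _ /imsetP[p pS ->]; move: (subsetP sub _ pS); rewrite !inE /= !dvE.
  by rewrite expnSr !ltn_divLR ?qq0.
have aB : avoid pi B by apply: avoid_contract.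
have hB := IH _ subB aB.
have E1 : #|S| = \sum_(b in B) #|blk qq S b|.
  rewrite -sum1_card (partition_big (cq qq) (mem B)) /=; last first.
    by move=> p pS; apply: imset_f.
  by apply: eq_bigr => b _; rewrite sum1dep_card.
have hW : #|[set b in B | k <= #|colsb qq S b|]| <= qq ^ j * (k.-1 * 2 ^ qq).
  apply: (count_split (proj := snd)).
    by move=> b /(subsetP subB); rewrite inE => /andP[].
  move=> J; apply: leq_trans (WJ_bound k0 qq0 J aS).
  by apply: subset_leq_card; apply/subsetP => b; rewrite !inE.
have hT : #|[set b in B | k <= #|rowsb qq S b|]| <= qq ^ j * (k.-1 * 2 ^ qq).
  apply: (count_split (proj := fst)).
    by move=> b /(subsetP subB); rewrite inE => /andP[].
  move=> J; apply: leq_trans (TJ_bound k0 qq0 J aS).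
  by apply: subset_leq_card; apply/subsetP => b; rewrite !inE.
rewrite E1; apply: (@leq_trans (\sum_(b in B) (k.-1 * k.-1 + qq ^ 2 * (k <= #|colsb qq S b|) + qq ^ 2 * (k <= #|rowsb qq S b|)))).
  by apply: leq_sum => b _; apply: blk_bound.
rewrite !big_split /= sum_nat_const -!big_distrr /= !sum_bool_card.
set w := #|[set b in B | _]| in hW *.
set t := #|[set b in B | _]| in hT *.
have hk : k.-1 * k.-1 + 1 <= qq by rewrite /qq; lia.
set D := k.-1 * 2 ^ qq in hW hT *.
rewrite -/(cMT) (expnSr qq j).
set Q := qq ^ j in hB hW hT *. set P := qq ^ 2 in hW hT *. set C := cMT in hB *.
set a := k.-1 * k.-1 in hk *.
have h1 : #|B| * a <= C * Q * a by rewrite leq_mul2r hB orbT.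
have h2 : P * w + P * t <= C * Q.
  have h4 : P * w + P * t <= P * (Q * D) + P * (Q * D) by rewrite leq_add // leq_mul2l ?hW ?hT orbT.
  apply: (leq_trans h4); rewrite /C /cMT -/P -/D.
  have -> : P * (Q * D) + P * (Q * D) = (2 * P * D) * Q by nia.
  by rewrite mulnDl leq_addr.
have h3 : C * Q * a + C * Q <= C * (Q * qq).
  by rewrite -[X in _ + X]muln1 -mulnDr mulnA leq_mul2l hk orbT.
rewrite -addnA; apply: leq_trans _ h3; exact: leq_add.
Qed.
End MT.

Lemma box_mono N a b : a <= b -> box N a \subset box N b.
Proof.
move=> ab; apply/subsetP => p; rewrite !inE => /andP[h1 h2].
by rewrite (leq_trans h1 ab) (leq_trans h2 ab).
Qed.

Lemma min_pow (r a : nat) : 1 < r -> 0 < a -> exists j, a <= r ^ j /\ r ^ j <= r * a.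
Proof.
move=> r1 a0.
have ex : exists j, a <= r ^ j by exists a; apply: ltnW; apply: ltn_expl.
case: (ex_minnP ex) => j hj hmin; exists j; split => //.
case: j hj hmin => [|j] hj hmin.
  by rewrite expn0 in hj *; nia.
rewrite expnS leq_mul2l; apply/orP; right.
by rewrite leqNgt; apply/negP => h; have := hmin j (ltnW h); lia.
Qed.

Section Klazar.
Variables (N k : nat) (pi : 'S_k).
Hypothesis k1 : 1 < k.
Local Notation pt := (pt N).
Let k0 : 0 < k. Proof. by apply: ltnW. Qed.
Definition F1 := cMT k * qq k.

Lemma MT_gen a (S : {set pt}) : 0 < a -> S \subset box N a -> avoid pi S -> #|S| <= F1 * a.
Proof.
move=> a0 sub aS.
have q1 : 1 < qq k by rewrite /qq; lia.
have [j [h1 h2]] := min_pow q1 a0.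
apply: leq_trans (MT k0 (subset_trans sub (box_mono N h1)) aS) _.
by rewrite /F1 -mulnA leq_mul2l h2 orbT.
Qed.

Definition Aset a := [set S : {set pt} | (S \subset box N a) && avoid pi S].

Lemma fiber4 (b : pt) : #|[set p : pt | cq 2 p == b]| <= 4.
Proof.
have inj : {in [set p : pt | cq 2 p == b] &, injective (fun p : pt => (md 2 p.1, md 2 p.2))}.
  move=> [x1 x2] [y1 y2]; rewrite !inE => /eqP e1 /eqP e2 [] /(congr1 val) m1 /(congr1 val) m2.
  rewrite -e2 in e1; case: e1 => /(congr1 val) d1 /(congr1 val) d2.
  move: m1 m2 d1 d2; rewrite !mdE !dvE => m1 m2 d1 d2.
  by congr pair; apply: val_inj; apply: (divmod_inj (q := 2)).
rewrite -(card_in_imset inj).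
apply: (@leq_trans #|setX (low N 2) (low N 2)|).
  by apply: subset_leq_card; apply/subsetP => _ /imsetP[p _ ->]; rewrite in_setX !md_low.
rewrite cardsX; have h : #|low N 2| <= 2 := low_card N 2; nia.
Qed.

Lemma U_card (B : {set pt}) : #|[set p : pt | cq 2 p \in B]| <= 4 * #|B|.
Proof.
rewrite -sum1dep_card (partition_big (cq 2) (mem B)) //=.
rewrite mulnC -sum_nat_const; apply: leq_sum => b _.
rewrite sum1dep_card; apply: leq_trans (fiber4 b); apply: subset_leq_card.
by apply/subsetP => p; rewrite !inE => /andP[].
Qed.

Lemma klazar_step j : #|Aset (2 ^ j.+1)| <= #|Aset (2 ^ j)| * 16 ^ (F1 * 2 ^ j).
Proof.
rewrite -sum1_card (partition_big (fun S : {set pt} => cq 2 @: S) (mem (Aset (2 ^ j)))); last first.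
  move=> S; rewrite !inE => /andP[sub aS]; rewrite avoid_contract // andbT.
  apply/subsetP => _ /imsetP[p pS ->]; move: (subsetP sub _ pS); rewrite !inE /= !dvE.
  by rewrite expnSr !ltn_divLR.
rewrite -sum_nat_const; apply: leq_sum => B hB; have : B \in Aset (2 ^ j) by []; rewrite inE => /andP[subB aB].
rewrite sum1dep_card.
apply: (@leq_trans #|powerset [set p : pt | cq 2 p \in B]|).
  apply: subset_leq_card; apply/subsetP => S; rewrite !inE => /andP[_ /eqP <-].
  by apply/subsetP => p pS; rewrite inE; apply: imset_f.
rewrite card_powerset.
apply: (@leq_trans (2 ^ (4 * #|B|))); first by rewrite leq_pexp2l // U_card.
rewrite (_ : 16 = 2 ^ 4) // -expnM leq_pexp2l // leq_mul2l /=.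
apply: MT_gen => //; by rewrite expn_gt0.
Qed.

Lemma klazar j : #|Aset (2 ^ j)| <= 2 * 16 ^ (F1 * 2 ^ j).
Proof.
elim: j => [|j IH].
  apply: (@leq_trans #|powerset (box N 1)|).
    by apply: subset_leq_card; apply/subsetP => S; rewrite !inE => /andP[].
  rewrite card_powerset expn0 muln1.
  apply: (@leq_trans (2 ^ 1)); first by rewrite leq_pexp2l // (box1 k0 (subxx _)).
  have : 0 < 16 ^ (F1 * 2 ^ 0) by rewrite expn_gt0. lia.
apply: leq_trans (klazar_step j) _.
apply: leq_trans (leq_mul IH (leqnn _)) _.
by rewrite -mulnA -expnD -mulnDr addnn -mul2n expnS.
Qed.

Definition Kc := 2 * 16 ^ (2 * F1).

Lemma Aset_bound p : #|Aset p| <= Kc ^ p.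
Proof.
case: p => [|p].
  rewrite expn0; apply: (@leq_trans #|[set set0 : {set pt}]|); last by rewrite cards1.
  apply: subset_leq_card; apply/subsetP => S; rewrite !inE => /andP[sub _].
  apply/eqP; apply/setP => x; rewrite inE; apply/negP => xS.
  by move: (subsetP sub _ xS); rewrite inE /=.
have [j [h1 h2]] := @min_pow 2 p.+1 (erefl _) (erefl _).
apply: (@leq_trans #|Aset (2 ^ j)|).
  apply: subset_leq_card; apply/subsetP => S; rewrite !inE => /andP[sub ->].
  by rewrite (subset_trans sub (box_mono N h1)).
apply: leq_trans (klazar j) _.
rewrite /Kc expnMn -expnM.
apply: leq_mul; first by rewrite -{1}(expn1 2) leq_pexp2l.
rewrite leq_pexp2l // (mulnC 2 F1) -mulnA leq_mul2l h2 orbT //.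
Qed.
End Klazar.

Section Rank.
Variable n : nat.
Definition rk (A : {set 'I_n}) (x : 'I_n) : 'I_n := insubd x #|[set y in A | (y < x)%N]|.

Lemma rk_small (A : {set 'I_n}) (x : 'I_n) : #|[set y in A | (y < x)%N]| <= x.
Proof. by apply: card_bound => i; rewrite inE => /andP[]. Qed.

Lemma rkE (A : {set 'I_n}) (x : 'I_n) : val (rk A x) = #|[set y in A | (y < x)%N]|.
Proof. by rewrite val_insubd (leq_ltn_trans (rk_small A x) (ltn_ord x)). Qed.

Lemma rk_mono (A : {set 'I_n}) (x y : 'I_n) : x \in A -> y \in A -> (x < y)%N -> (rk A x < rk A y)%N.
Proof.
move=> xA yA xy; rewrite !rkE; apply: proper_card; apply/properP; split.
  apply/subsetP => z; rewrite !inE => /andP[-> zx] /=; exact: ltn_trans zx xy.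
by exists x; rewrite !inE ?xA ?xy // ltnn andbF.
Qed.

Lemma rk_monoR (A : {set 'I_n}) (x y : 'I_n) : x \in A -> y \in A -> (rk A x < rk A y)%N -> (x < y)%N.
Proof.
move=> xA yA h; rewrite ltnNge; apply/negP; rewrite leq_eqVlt => /orP[/eqP e|yx].
  by move: h; rewrite (val_inj e) ltnn.
by have := rk_mono yA xA yx; rewrite ltnNge (ltnW h).
Qed.

Lemma rk_inj (A : {set 'I_n}) : {in A &, injective (rk A)}.
Proof.
move=> x y xA yA e; apply: val_inj; case: (ltngtP x y) => // h.
  by have := rk_mono xA yA h; rewrite e ltnn.
by have := rk_mono yA xA h; rewrite e ltnn.
Qed.

Lemma rk_lt (A : {set 'I_n}) (x : 'I_n) : x \in A -> (rk A x < #|A|)%N.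
Proof.
move=> xA; rewrite rkE; apply: proper_card; apply/properP; split.
  by apply/subsetP => z; rewrite inE => /andP[].
by exists x => //; rewrite inE ltnn andbF.
Qed.
End Rank.

Section Main.
Variables (n k : nat) (pi : 'S_k) (E Cl : {set {set 'I_n}}) (ch : 'I_n -> {set 'I_n}).
Hypothesis k1 : 1 < k.
Hypothesis hcl : forall C, C \in Cl -> is_clique k E C.
Hypothesis hch : forall v, ch v \in Cl /\ v \in ch v.

Definition part C := [set v | ch v == C].
Definition Mp (s : 'S_n) C : {set pt n} :=
  [set (rk (part C) v, rk (s @: part C) (s v)) | v in part C].
Definition gp (s : 'S_n) : {ffun 'I_n -> {set 'I_n}} := [ffun w => ch ((s^-1)%g w)].
Definition Phi s := (gp s, [ffun C => Mp s C]).

Lemma memV (s : 'S_n) (C : {set 'I_n}) (w : 'I_n) : (w \in s @: part C) = (ch ((s^-1)%g w) == C).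
Proof.
apply/imsetP/idP => [[u] | h]; first by rewrite inE => hu ->; rewrite permK.
by exists ((s^-1)%g w); rewrite ?inE ?permKV.
Qed.

Lemma Phi_inj : injective Phi.
Proof.
move=> s1 s2 [] eg eM; apply/permP => v.
set C := ch v.
have eV : s1 @: part C = s2 @: part C.
  apply/setP => w; have := congr1 (fun g : {ffun 'I_n -> {set 'I_n}} => g w) eg; rewrite /= !ffunE => e.
  by rewrite !memV e.
have eMC := congr1 (fun f : {ffun {set 'I_n} -> {set pt n}} => f C) eM; rewrite /= !ffunE in eMC.
have vP : v \in part C by rewrite inE.
have : (rk (part C) v, rk (s1 @: part C) (s1 v)) \in Mp s2 C.
  by rewrite -eMC; apply: imset_f.
case/imsetP => v' v'P [e1 e2].
have ev : v = v' := rk_inj vP v'P e1.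
rewrite -ev eV in e2; apply: (rk_inj _ _ e2).
- by rewrite -eV; apply: imset_f.
- by apply: imset_f.
Qed.

Lemma Mp_box (s : 'S_n) (C : {set 'I_n}) : Mp s C \subset box n #|part C|.
Proof.
apply/subsetP => _ /imsetP[v vP ->]; rewrite inE /= rk_lt //.
have := rk_lt (A := s @: part C) (imset_f s vP).
by rewrite card_imset //; apply: perm_inj.
Qed.

Lemma Mp_avoid (s : 'S_n) (C : {set 'I_n}) : havoids E pi s -> avoid pi (Mp s C).
Proof.
move=> hav; apply: avoidI => f h1 h2 h3.
have [x hx] : exists x : 'I_k -> 'I_n, forall t, x t \in part C /\
    f t = (rk (part C) (x t), rk (s @: part C) (s (x t))).
  suff H : forall t : 'I_k, exists v : 'I_n, v \in part C /\
    f t = (rk (part C) v, rk (s @: part C) (s v)).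
    by have [g hg] := fin_all_exists H; exists g.
  by move=> t; have /imsetP[v vP ->] := h1 t; exists v.
have xinc : forall s0 t : 'I_k, (s0 < t)%N -> (x s0 < x t)%N.
  move=> s0 t st; have := h2 _ _ st; case: (hx s0) => xs ->; case: (hx t) => xt -> /=.
  exact: rk_monoR.
have sinc : forall s0 t : 'I_k, (pi s0 < pi t)%N -> (s (x s0) < s (x t))%N.
  move=> s0 t st; have := h3 _ _ st; case: (hx s0) => xs ->; case: (hx t) => xt -> /=.
  by apply: rk_monoR; apply: imset_f.
have xinj : injective x.
  move=> a b e; apply: val_inj; case: (ltngtP a b) => // h.
    by have := xinc _ _ h; rewrite e ltnn.
  by have := xinc _ _ h; rewrite e ltnn.
move/negP: hav; apply; apply/existsP; exists [ffun t => x t]; apply/and3P; split.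
- apply/forallP => a; apply/forallP => b; apply/implyP; rewrite !ffunE; exact: xinc.
- have k0 : 0 < k by lia.
  have CCl : C \in Cl.
    by case: (hx (Ordinal k0)) => /[!inE] /eqP <- _; case: (hch (x (Ordinal k0))).
  apply: (hcl CCl).
    apply/subsetP => _ /imsetP[t _ ->]; rewrite ffunE.
    by case: (hx t) => /[!inE] /eqP <- _; case: (hch (x t)).
  rewrite card_imset ?card_ord // => a b; rewrite !ffunE; exact: xinj.
- apply/forallP => a; apply/forallP => b; rewrite !ffunE.
  apply/eqP; apply/idP/idP; first exact: sinc.
  move=> h; case: (ltngtP (pi a) (pi b)) => // h'.
    by have := sinc _ _ h'; rewrite ltnNge (ltnW h).
  have e : a = b by apply: (perm_inj (s := pi)); apply: val_inj.
  by move: h; rewrite e ltnn.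
Qed.

Lemma sum_part : \sum_(C : {set 'I_n}) #|part C| = n.
Proof.
have h : \sum_(v : 'I_n) 1 = \sum_(C : {set 'I_n}) #|part C|.
  rewrite (partition_big ch predT) //.
  by apply: eq_bigr => C _; rewrite /part sum1dep_card.
by rewrite -h sum1_card card_ord.
Qed.

Lemma count_avoid : #|[set s : 'S_n | havoids E pi s]| <= (#|Cl| * Kc k) ^ n.
Proof.
rewrite -(card_imset _ Phi_inj).
apply: (@leq_trans #|[predX (ffun_on (mem Cl)) & family (fun C => mem (Aset n pi #|part C|))]|).
  apply: subset_leq_card; apply/subsetP => _ /imsetP[s hs ->].
  rewrite inE in hs; rewrite inE /=; apply/andP; split.
    by apply/ffun_onP => w; rewrite ffunE; case: (hch ((s^-1)%g w)).
  apply/familyP => C; rewrite ffunE inE Mp_box; exact: Mp_avoid.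
rewrite cardX card_ffun_on card_ord card_family foldrE big_map big_enum /=.
rewrite expnMn leq_mul2l; apply/orP; right.
rewrite -[X in _ <= _ ^ X]sum_part expn_sum; apply: leq_prod => C _.
by rewrite cardE -cardE; apply: Aset_bound.
Qed.
End Main.

Lemma INR_sum_le n (F : 'I_n -> nat) (D : R) :
  (forall i, Rle (INR (F i)) D) -> Rle (INR (\sum_(i < n) F i)) (Rmult (INR n) D).
Proof.
elim: n F => [|n IH] F hF.
  by rewrite big_ord0 /=; lra.
rewrite big_ord_recr plus_INR S_INR.
rewrite Rmult_plus_distr_r Rmult_1_l; apply: Rplus_le_compat; last exact: hF.
exact: (IH (fun i => F (widen_ord (leqnSn n) i)) (fun i => hF _)).
Qed.

Lemma double_count n L (Cl : {set {set 'I_n}}) :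
  (forall C, C \in Cl -> #|C| = L) ->
  #|Cl| * L = \sum_(v < n) #|[set C in Cl | v \in C]|.
Proof.
move=> hL.
rewrite -sum_nat_const.
have -> : \sum_(C in Cl) L = \sum_(C in Cl) \sum_(v < n) (v \in C : nat).
  apply: eq_bigr => C hC; rewrite -(hL C hC) -sum1_card big_mkcond /=.
  by apply: eq_bigr => v _; case: (v \in C).
rewrite exchange_big /=; apply: eq_bigr => v _.
by rewrite sum_bool_card.
Qed.

Lemma INR_expn a b : INR (a ^ b) = pow (INR a) b.
Proof.
elim: b => [|b IH]; first by rewrite expn0.
by rewrite expnS -multE mult_INR IH.
Qed.

Lemma ln_le2 (x : R) : Rle 2 x -> Rle (ln 2) (ln x).
Proof.
move=> h; case: (Rle_lt_or_eq_dec _ _ h) => [lt|<-]; last by apply: Rle_refl.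
by apply: Rlt_le; apply: ln_increasing => //; lra.
Qed.

Lemma ln2_pos : Rlt 0 (ln 2).
Proof. rewrite -ln_1; apply: ln_increasing; lra. Qed.

Theorem theorem2p4 (k : nat) (pi : 'S_k) (eps delta0 Delta0 : R) :
  (2 <= k)%N -> Rlt 0 eps -> Rle 1 delta0 -> Rlt 0 Delta0 ->
  exists c : R,
    forall (n L : nat) (E : {set {set 'I_n}}) (Cl : {set {set 'I_n}}),
      (2 <= n)%N -> (0 < L)%N ->
      k_uniform k E ->
      (forall C, C \in Cl -> #|C| = L /\ is_clique k E C) ->
      (forall v : 'I_n,
          Rle delta0 (INR #|[set C in Cl | v \in C]|) /\
          Rle (INR #|[set C in Cl | v \in C]|) Delta0) ->
      Rle (INR #|[set sigma : 'S_n | havoids E pi sigma]|)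
        (pow (c * INR n * Rpower (ln (INR n)) (2 + eps) / INR L) n)%R.
Proof.
move=> k2 eps0 d1 D0.
set K := INR (Kc k).
set R2 := Rpower (ln 2) (2 + eps).
have R2pos : Rlt 0 R2 by rewrite /R2 /Rpower; apply: exp_pos.
exists (Rdiv (Rmult K Delta0) R2).
move=> n L E Cl n2 L0 hunif hCl hdeg.
have [ch hch] : exists ch : 'I_n -> {set 'I_n}, forall v, ch v \in Cl /\ v \in ch v.
  suff H : forall v : 'I_n, exists C : {set 'I_n}, C \in Cl /\ v \in C.
    by have [g hg] := fin_all_exists H; exists g.
  move=> v; have [h1 _] := hdeg v.
  have : (0 < #|[set C in Cl | v \in C]|)%N.
    apply/ltP; apply: INR_lt; rewrite (_ : INR 0 = R0) //; lra.
  by move/card_gt0P => -[C]; rewrite inE => /andP[a b]; exists C.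
have hc := @count_avoid n k pi E Cl ch k2 (fun C hC => (hCl C hC).2) hch.
set m := #|Cl| in hc.
have hmL : Rle (Rmult (INR m) (INR L)) (Rmult (INR n) Delta0).
  rewrite -mult_INR /m multE (double_count (L := L)); last by move=> C /hCl[].
  by apply: INR_sum_le => v; case: (hdeg v).
have Lpos : Rlt 0 (INR L) by apply: lt_0_INR; apply/ltP.
have hm : Rle (INR m) (Rdiv (Rmult (INR n) Delta0) (INR L)).
  apply: (Rmult_le_reg_r (INR L)) => //.
  rewrite /Rdiv Rmult_assoc Rinv_l ?Rmult_1_r //; lra.
have n2R : Rle 2 (INR n) by apply: (le_INR 2 n); apply/leP.
set Rn := Rpower (ln (INR n)) (2 + eps).
have hR : Rle R2 Rn.
  apply: Rle_Rpower_l; first lra.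
  split; [exact: ln2_pos | exact: ln_le2].
have Kpos : Rle 0 K by apply: pos_INR.
apply: Rle_trans (le_INR _ _ (leP hc)) _.
rewrite INR_expn -multE mult_INR.
apply: pow_incr; split.
  by apply: Rmult_le_pos => //; apply: pos_INR.
set X := Rdiv (Rmult (Rmult (INR n) Delta0) K) (INR L).
have X0 : Rle 0 X.
  rewrite /X /Rdiv; apply: Rmult_le_pos; last by apply: Rlt_le; apply: Rinv_0_lt_compat.
  apply: Rmult_le_pos => //; apply: Rmult_le_pos; [apply: pos_INR | lra].
have e : Rdiv (Rmult (Rmult (Rdiv (Rmult K Delta0) R2) (INR n)) Rn) (INR L) = Rmult X (Rdiv Rn R2).
  rewrite /X; field; split; lra.
rewrite e.
have h1 : Rle (Rmult (INR m) K) X.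
  rewrite /X /Rdiv Rmult_assoc (Rmult_comm K) -Rmult_assoc.
  apply: Rmult_le_compat_r => //.
have h2 : Rle 1 (Rdiv Rn R2).
  apply: (Rmult_le_reg_r R2) => //; rewrite /Rdiv Rmult_assoc Rinv_l; lra.
apply: Rle_trans h1 _.
rewrite -{1}(Rmult_1_r X); apply: Rmult_le_compat_l => //.
Qed.
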